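(* Let $M$ be a Hausdorff space. Then $\mathcal{Q}_x(\mathcal{T}(M))\neq\emptyset$ for every $x\in M$, and $\bigcup_{x\in M}\mathcal{Q}_x(\mathcal{T}(M))$ is dense in $\mathcal{Q}(\mathcal{T}(M))$.
   Context: $\mathcal{T}(M)$ is the lattice of open subsets of $M$. A quasipoint of $\mathcal{T}(M)$ is a maximal dual ideal, i.e. a maximal nonempty family $\mathfrak{B}$ of open sets with $\emptyset\notin\mathfrak{B}$, upward closed and closed under finite intersections. $\mathcal{Q}(\mathcal{T}(M))$ is the set of quasipoints with the topology having base $\mathcal{Q}_U(\mathcal{T}(M))=\{\mathfrak{B}\mid U\in\mathfrak{B}\}$, $U\in\mathcal{T}(M)$. A quasipoint $\mathfrak{B}$ is a quasipoint over $x\in M$ if $x\in\bigcap_{U\in\mathfrak{B}}\overline{U}$; $\mathcal{Q}_x(\mathcal{T}(M))$ denotes the set of quasipoints over $x$. *)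

(* Defs.v *)
From HB Require Import structures.
From mathcomp Require Import all_boot all_order all_algebra.
From mathcomp Require Import all_classical all_reals all_analysis.
Set Implicit Arguments. Unset Strict Implicit. Unset Printing Implicit Defensive.
Local Open Scope classical_set_scope.

Section Quasipoints.
Variable M : topologicalType.

Definition dual_ideal (B : set (set M)) : Prop :=
  [/\ B !=set0,
      (forall U, B U -> open U),
      ~ B set0,
      (forall U V, B U -> open V -> U `<=` V -> B V) &
      (forall U V, B U -> B V -> B (U `&` V))].

Definition quasipoint (B : set (set M)) : Prop :=
  dual_ideal B /\ (forall B', dual_ideal B' -> B `<=` B' -> B' = B).

Definition Qspace : set (set (set M)) := quasipoint.

Definition QU (U : set M) : set (set (set M)) := [set B | quasipoint B /\ B U].

(* Open subsets of Q(T(M)) in the topology with base { Q_U | U open }: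
   exactly the unions of basic open sets. *)
Definition Qopen (S : set (set (set M))) : Prop :=
  S `<=` Qspace /\
  (forall B, S B -> exists U, [/\ open U, QU U B & QU U `<=` S]).

Definition Qdense (D : set (set (set M))) : Prop :=
  D `<=` Qspace /\ (forall S, Qopen S -> S !=set0 -> (S `&` D) !=set0).

Definition Qx (x : M) : set (set (set M)) :=
  [set B | quasipoint B /\ (forall U, B U -> closure U x)].

End Quasipoints.

(* Main.v *)
Require Import Defs.
From HB Require Import structures.
From mathcomp Require Import all_boot all_order all_algebra.
From mathcomp Require Import all_classical all_reals all_analysis.
Local Open Scope classical_set_scope.

Section Aux.
Variable M : topologicalType.

Definition Nx (x : M) : set (set M) := [set U | open U /\ U x].

Lemma Nx_dual (x : M) : dual_ideal (Nx x).
Proof.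
split.
- by exists setT; split => //; exact: openT.
- by move=> U [].
- by move=> [].
- by move=> U V [_ Ux] oV UV; split => //; exact: UV.
- by move=> U V [oU Ux] [oV Vx]; split; [exact: openI|].
Qed.

Lemma exists_qp (x : M) : exists B, quasipoint B /\ Nx x `<=` B.
Proof.
pose P := [set C : set (set M) | dual_ideal (Nx x `|` C)].
have [A [PA maxA]] : exists A, P A /\ forall B, A `<` B -> ~ P B.
  apply: Zorn_bigcup => F FP Ftot.
  rewrite /P.
  split.
  - by exists setT; left; split => //; exact: openT.
  - move=> U [[]//|[C FC CU]].
    by have [_ + _ _ _] := FP C FC; apply; right.
  - move=> [[]//|[C FC CU]].
    by have [_ _ + _ _] := FP C FC; apply; right.
  - move=> U V [NU|[C FC CU]] oV UV.
      by left; have [_ _ _ + _] := Nx_dual x; apply; [exact: NU| |].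
    have [_ _ _ + _] := FP C FC.
    by move=> /(_ U V (or_intror CU) oV UV) [?|?]; [left|right; exists C].
  - have key : forall C U V, F C -> (Nx x `|` C) U -> (Nx x `|` C) V ->
        (Nx x `|` \bigcup_(X in F) X) (U `&` V).
      move=> C U V FC HU HV.
      have [_ _ _ _ +] := FP C FC.
      by move=> /(_ U V HU HV) [?|?]; [left|right; exists C].
    move=> U V [NU|[C FC CU]] [NV|[D FD DV]].
    + by left; have [_ _ _ _ +] := Nx_dual x; apply.
    + by apply: (key D) => //; [left|right].
    + by apply: (key C) => //; [right|left].
    + have [CD|DC] := Ftot C D FC FD.
        by apply: (key D) => //; right => //; exact: CD.
      by apply: (key C) => //; right => //; exact: DC.
exists (Nx x `|` A); split; last by move=> U NU; left.
split => // B' dB' sB'.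
have PB' : P B'.
  rewrite /P /=; suff -> : Nx x `|` B' = B' by [].
  by apply/seteqP; split => [U [/(fun h => sB' _ (or_introl h))|]|U ?]; [|done|right].
have AB' : A `<=` B' by move=> U AU; apply: sB'; right.
have : ~ (A `<` B') by move=> /maxA; apply.
move=> nprop.
have B'A : B' `<=` A.
  apply: contra_notP nprop => nB'A; split => //.
apply/seteqP; split => //.
by move=> U /B'A AU; right.
Qed.

Lemma qp_Qx (x : M) B : quasipoint B -> Nx x `<=` B -> Qx x B.
Proof.
move=> qB NB; split => //.
case: qB => -[_ oB nB0 upB capB] maxB.
move=> U BU W; rewrite nbhsE => -[V [oV Vx] VW].
have BV : B V by apply: NB.
have BUV := capB _ _ BU BV.
have : U `&` V !=set0.
  by apply/set0P; apply/negP => /eqP E; apply: nB0; rewrite -E.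
by move=> [y [Uy Vy]]; exists y; split => //; exact: VW.
Qed.

End Aux.

Theorem proposition2p41 (M : topologicalType) (HM : hausdorff_space M) :
  (forall x : M, Qx x !=set0) /\ Qdense (\bigcup_(x in [set: M]) Qx x).
Proof.
split.
  move=> x; have [B [qB NB]] := @exists_qp M x.
  by exists B; exact: (@qp_Qx M x).
split; first by move=> B [x _ []].
move=> S [SQ Sop] [B SB].
have [U [oU [qB BU] US]] := Sop B SB.
have : U !=set0.
  apply/set0P; apply/negP => /eqP E.
  by case: qB => -[_ _ nB0 _ _] _; apply: nB0; rewrite -E.
move=> [x Ux].
have [B' [qB' NB']] := @exists_qp M x.
exists B'; split.
  by apply: US; split => //; apply: NB'; split.
by exists x => //; exact: (@qp_Qx M x).
Qed.
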